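(* Consider mixed site/bond percolation on the $m\times m$ grid $[m]^2$ in which each node is open with probability $p$ and each link is open with probability $q$, all independently. Then the size of the largest bond-connected component stochastically dominates the size of the largest open component in site percolation on $[m]^2$ in which each node is open independently with probability $pq^2$.
   Context: The grid has node set $[m]^2=\{1,\dots,m\}^2$, and links between pairs of nodes at $\ell_1$ distance one (with the same adjacency used in both models). In the mixed model, two nodes $u,v$ are bond-connected if there is a sequence of open nodes $u=u_1,\dots,u_\ell=v$ such that each link $u_iu_{i+1}$ is open; bond-connected components are the classes of this relation. In site percolation, open components are the maximal sets of open nodes connected through adjacent open nodes. *)

(* Defs.v *)
From HB Require Import structures.
From mathcomp Require Import all_boot all_order all_algebra.
Set Implicit Arguments. Unset Strict Implicit. Unset Printing Implicit Defensive.
Import Order.TTheory GRing.Theory Num.Theory.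

(* Nodes of the m x m grid [m]^2, encoded as 'I_m * 'I_m (coordinate i stands for i+1). *)
Definition node (m : nat) : finType := ('I_m * 'I_m)%type.

Definition absdiff (a b : nat) : nat := (a - b) + (b - a).

Definition adj (m : nat) (u v : node m) : bool :=
  absdiff u.1 v.1 + absdiff u.2 v.2 == 1.

Definition is_link (m : nat) (e : {set node m}) : bool :=
  [exists u : node m, exists v : node m, adj u v && (e == [set u; v])].

Definition link (m : nat) : finType := {e : {set node m} | is_link e}.

(* state of the link between u and v (false if u,v not adjacent) *)
Definition link_open (m : nat) (wb : {ffun link m -> bool}) (u v : node m) : bool :=
  if @insub _ (@is_link m) (link m) [set u; v] is Some e then wb e else false.

(* size of the largest component (0 if no node is open) for a relation r
   whose steps only join open nodes *)
Definition largest_comp (m : nat) (open : pred (node m)) (r : rel (node m)) : nat :=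
  \max_(u : node m | open u) #|[set v | connect r u v]|.

Definition bond_rel (m : nat) (ws : {ffun node m -> bool}) (wb : {ffun link m -> bool})
  : rel (node m) :=
  fun u v => [&& ws u, ws v, adj u v & link_open wb u v].

Definition largest_bond_comp (m : nat) (ws : {ffun node m -> bool})
  (wb : {ffun link m -> bool}) : nat :=
  largest_comp ws (bond_rel ws wb).

Definition site_rel (m : nat) (ws : {ffun node m -> bool}) : rel (node m) :=
  fun u v => [&& ws u, ws v & adj u v].

Definition largest_site_comp (m : nat) (ws : {ffun node m -> bool}) : nat :=
  largest_comp ws (site_rel ws).

Local Open Scope ring_scope.
Definition bern {R : realFieldType} (p : R) (b : bool) : R := if b then p else 1 - p.

Definition site_weight {R : realFieldType} (m : nat) (p : R) (ws : {ffun node m -> bool}) : R :=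
  \prod_(v : node m) bern p (ws v).

Definition bond_weight {R : realFieldType} (m : nat) (q : R) (wb : {ffun link m -> bool}) : R :=
  \prod_(e : link m) bern q (wb e).

Definition P_mixed_ge {R : realFieldType} (m : nat) (p q : R) (k : nat) : R :=
  \sum_(ws : {ffun node m -> bool})
    \sum_(wb : {ffun link m -> bool} | (k <= largest_bond_comp ws wb)%N)
       site_weight p ws * bond_weight q wb.

Definition P_site_ge {R : realFieldType} (m : nat) (r : R) (k : nat) : R :=
  \sum_(ws : {ffun node m -> bool} | (k <= largest_site_comp ws)%N) site_weight r ws.

(* Main.v *)
Require Import Defs.
From HB Require Import structures.
From mathcomp Require Import all_boot all_order all_algebra.
From mathcomp Require Import ring zify.
Import Order.TTheory GRing.Theory Num.Theory.
Set Implicit Arguments. Unset Strict Implicit. Unset Printing Implicit Defensive.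
Local Open Scope ring_scope.


Definition affine (R : realFieldType) (h : R -> R) := forall t, h t = t * h 1 + (1 - t) * h 0.
Definition cst (R : realFieldType) (h : R -> R) := forall t, h t = h 0.

Lemma cst_affine (R : realFieldType) (h : R -> R) : cst h -> affine h.
Proof. move=> H t. rewrite (H t) (H 1). ring. Qed.

Lemma affine_sum (R : realFieldType) (I : finType) (P : pred I) (h : I -> R -> R) :
  (forall i, affine (h i)) -> affine (fun t => \sum_(i | P i) h i t).
Proof.
move=> H t /=.
rewrite (eq_bigr (fun i => t * h i 1 + (1 - t) * h i 0)); last by move=> i _; exact: H.
by rewrite big_split /= -!mulr_sumr.
Qed.

Lemma affine_mulr (R : realFieldType) (h g : R -> R) :
  affine h -> cst g -> affine (fun t => h t * g t).
Proof. move=> Hh Hg t /=. rewrite (Hg t) (Hg 1) (Hh t). ring. Qed.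

Lemma affine_mull (R : realFieldType) (h g : R -> R) :
  cst g -> affine h -> affine (fun t => g t * h t).
Proof. move=> Hg Hh t /=. rewrite (Hg t) (Hg 1) (Hh t). ring. Qed.

Lemma cst_mul (R : realFieldType) (h g : R -> R) :
  cst h -> cst g -> cst (fun t => h t * g t).
Proof. move=> Hh Hg t /=. by rewrite (Hg t) (Hh t). Qed.

Lemma affine_prod (R : realFieldType) (I : finType) (h : I -> R -> R) (i0 : I) :
  (forall i, affine (h i)) -> (forall i, i != i0 -> cst (h i)) ->
  affine (fun t => \prod_i h i t).
Proof.
move=> Ha Hc t /=.
have Hg : forall s, \prod_(i | i != i0) h i s = \prod_(i | i != i0) h i 0.
  move=> s; apply: eq_bigr => i /Hc H; exact: H.
have Hs : forall s, \prod_i h i s = h i0 s * \prod_(i | i != i0) h i s.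
  by move=> s; rewrite (bigD1 i0).
rewrite !Hs (Hg t) (Hg 1) (Ha i0 t). ring.
Qed.

Lemma cst_prod (R : realFieldType) (I : finType) (h : I -> R -> R) :
  (forall i, cst (h i)) -> cst (fun t => \prod_i h i t).
Proof. move=> Hc t /=; apply: eq_bigr => i _; exact: Hc. Qed.

Lemma affine_bern (R : realFieldType) (h : R -> R) (b : bool) :
  affine h -> affine (fun t => bern (h t) b).
Proof. move=> H t /=; rewrite /bern; case: b; rewrite ?(H t) //. ring. Qed.

Lemma cst_bern (R : realFieldType) (h : R -> R) (b : bool) :
  cst h -> cst (fun t => bern (h t) b).
Proof. move=> H t /=; by rewrite (H t). Qed.

Definition upd (R : realFieldType) (J : finType) (th : {ffun J -> R}) (j : J) (t : R) :
  {ffun J -> R} := [ffun k => if k == j then t else th k].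

Lemma affine_upd (R : realFieldType) (J : finType) (th : {ffun J -> R}) j k :
  affine (fun t => upd th j t k).
Proof. move=> t; rewrite /upd !ffunE; case: eqP => _; ring. Qed.

Lemma cst_upd (R : realFieldType) (J : finType) (th : {ffun J -> R}) j k :
  k != j -> cst (fun t => upd th j t k).
Proof. move=> H t; by rewrite /upd !ffunE (negbTE H). Qed.

Lemma point_sum (R : realFieldType) (I : finType) (a : I -> R) (b : {ffun I -> bool})
  (F : {ffun I -> bool} -> R) :
  (forall i, a i = (b i)%:R) ->
  \sum_(w : {ffun I -> bool}) (\prod_i bern (a i) (w i)) * F w = F b.
Proof.
move=> Ha. rewrite (bigD1 b) //= [X in _ + X]big1 ?addr0; last first.
move=> w Hw.
have : [exists i, w i != b i].
  apply: contraNT Hw => /existsPn H; apply/eqP/ffunP => i; exact/eqP/negPn/H.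
case/existsP => i Hi.
rewrite (bigD1 i) //= Ha.
suff -> : bern (b i)%:R (w i) = 0 :> R by rewrite !mul0r.
by move: Hi; case: (b i); case: (w i) => //= _; rewrite /bern ?subrr.
rewrite big1 ?mul1r // => i _; rewrite Ha /bern; case: (b i) => //=.
by rewrite subr0.
Qed.

Lemma multiaffine_le (R : realFieldType) (J : finType) (P1 P2 : {ffun J -> R} -> R) :
  (forall (th : {ffun J -> R}) j, affine (fun t => P1 (upd th j t))) ->
  (forall (th : {ffun J -> R}) j, affine (fun t => P2 (upd th j t))) ->
  (forall b : {ffun J -> bool}, P1 [ffun k => (b k)%:R] <= P2 [ffun k => (b k)%:R]) ->
  forall th : {ffun J -> R}, (forall k, 0 <= th k <= 1) -> P1 th <= P2 th.
Proof.
move=> A1 A2 Hv.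
suff H : forall n (D : {set J}) (th : {ffun J -> R}), #|D| = n -> (forall k, 0 <= th k <= 1) ->
   (forall k, k \notin D -> (th k == 0) || (th k == 1)) -> P1 th <= P2 th.
  move=> th Hth; apply: (H _ setT th erefl Hth) => k; by rewrite in_setT.
elim=> [|n IH] D th HD Hb H01.
  have -> : th = [ffun k => (th k == 1)%:R].
    apply/ffunP => k; rewrite ffunE.
    have := H01 k; rewrite (cards0_eq HD) in_set0 => /(_ isT) /orP [] /eqP ->.
      by rewrite eq_sym oner_eq0.
    by rewrite eqxx.
  have E : [ffun k => ([ffun k => th k == 1] k)%:R] = [ffun k => (th k == 1)%:R :> R].
    by apply/ffunP => k; rewrite !ffunE.
  by rewrite -E; apply: Hv.
have [j Dj] : exists j, j \in D.
  apply/set0Pn; by rewrite -card_gt0 HD.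
have Eth : th = upd th j (th j).
  by apply/ffunP => k; rewrite ffunE; case: eqP => [->|].
rewrite Eth (A1 th j (th j)) (A2 th j (th j)).
have HD' : #|D :\ j| = n by move: HD; rewrite (cardsD1 j D) Dj add1n => -[].
have Hup : forall x, (x == 0) || (x == 1) -> 0 <= x <= 1 -> P1 (upd th j x) <= P2 (upd th j x).
  move=> x Hx Hx01; apply: (IH (D :\ j)) => // k; rewrite ffunE.
    by case: eqP.
  rewrite in_setD1 negb_and negbK; case: eqP => //= _ /H01 //.
have /andP [t0 t1] := Hb j.
apply: lerD; apply: ler_wpM2l.
- done.
- apply: Hup; by rewrite ?eqxx ?orbT ?ler01 ?lexx.
- by rewrite subr_ge0.
- apply: Hup; by rewrite ?eqxx ?ler01 ?lexx.
Qed.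


Definition key m (u : node m) : nat := (u.1 + u.2)%N.

Lemma adj_key m (u v : node m) : adj u v -> (key u < key v)%N || (key v < key u)%N.
Proof. rewrite /adj /absdiff /key => /eqP H. apply/orP. lia. Qed.

Lemma adj_sym m (u v : node m) : adj u v = adj v u.
Proof. rewrite /adj /absdiff; apply/idP/idP => /eqP H; apply/eqP; lia. Qed.

Lemma link_ex m (e : link m) : exists uv : node m * node m,
  [&& adj uv.1 uv.2, val e == [set uv.1; uv.2] & (key uv.1 < key uv.2)%N].
Proof.
have := valP e; case/existsP => u /existsP [v /andP [Huv He]].
case/orP: (adj_key Huv) => Hk.
  by exists (u, v); rewrite /= Huv He Hk.
by exists (v, u); rewrite /= -adj_sym Huv Hk andbT setUC.
Qed.

Definition ends m (e : link m) : node m * node m := xchoose (link_ex e).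
Definition own m (e : link m) : node m := (ends e).1.

Lemma ends_spec m (e : link m) :
  [&& adj (ends e).1 (ends e).2, val e == [set (ends e).1; (ends e).2]
    & (key (ends e).1 < key (ends e).2)%N].
Proof. exact: (xchooseP (link_ex e)). Qed.

Lemma own_in m (e : link m) : own e \in val e.
Proof. by case/and3P: (ends_spec e) => _ /eqP -> _; rewrite /own set21. Qed.

Lemma own_card m (v : node m) : (#|[set e : link m | own e == v]| <= 2)%N.
Proof.
pose hor (e : link m) := (((ends e).2).2 : nat) == (v.2 : nat).
rewrite -(card_in_imset (f := hor)).
  by apply: leq_trans (max_card _) _; rewrite card_bool.
move=> e1 e2; rewrite !inE => /eqP H1 /eqP H2 Hh.
case/and3P: (ends_spec e1) => A1 /eqP V1 K1.
case/and3P: (ends_spec e2) => A2 /eqP V2 K2.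
apply: val_inj; rewrite V1 V2; congr (_ :|: _).
  by rewrite -[(ends e1).1]/(own e1) -[(ends e2).1]/(own e2) H1 H2.
congr [set _].
move: A1 A2 K1 K2 Hh; rewrite /hor /adj /absdiff /key -[(ends e1).1]/(own e1) -[(ends e2).1]/(own e2) H1 H2.
case: (ends e1).2 => a1 b1; case: (ends e2).2 => a2 b2 /= /eqP A1 /eqP A2 K1 K2 Hh.
have E1 : (a1 : nat) = a2 /\ (b1 : nat) = b2.
  case: (eqVneq (b1 : nat) v.2) Hh => Hb1; case: (eqVneq (b2 : nat) v.2) => Hb2 //= _.
  lia.
  move: A1 A2 K1 K2 Hb1 Hb2; move: (nat_of_ord v.1) (nat_of_ord v.2) (nat_of_ord a1) (nat_of_ord b1) (nat_of_ord a2) (nat_of_ord b2).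
  move=> x y p q r s A1 A2 K1 K2 /eqP Hb1 /eqP Hb2; lia.

by case: E1 => E1 E2; congr (_, _); apply: val_inj.
Qed.

Definition J m : finType := (node m + link m + node m)%type.

Definition rho m (k : J m) : node m :=
  match k with inl (inl v) => v | inl (inr e) => own e | inr v => v end.

Definition at_ (R : realFieldType) m (th : {ffun J m -> R}) (v : node m) : R :=
  \prod_(k | rho k == v) th k.

Definition P1 (R : realFieldType) m (k0 : nat) (th : {ffun J m -> R}) : R :=
  \sum_(x : {ffun node m -> bool})
     (\prod_v bern (at_ th v) (x v)) * (k0 <= largest_site_comp x)%:R.

Definition P2 (R : realFieldType) m (k0 : nat) (th : {ffun J m -> R}) : R :=
  \sum_(ws : {ffun node m -> bool}) \sum_(wb : {ffun link m -> bool})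
     (\prod_v bern (th (inl (inl v))) (ws v)) * (\prod_e bern (th (inl (inr e))) (wb e))
     * (k0 <= largest_bond_comp ws wb)%:R.

Lemma at_upd (R : realFieldType) m (th : {ffun J m -> R}) j t v :
  at_ (upd th j t) v =
  if rho j == v then t * \prod_(k | (rho k == v) && (k != j)) th k else at_ th v.
Proof.
rewrite /at_; case: ifP => Hj.
  rewrite (bigD1 j) //= /upd ffunE eqxx; congr (_ * _).
  by apply: eq_bigr => k /andP [_ Hk]; rewrite ffunE (negbTE Hk).
apply: eq_bigr => k Hk; rewrite /upd ffunE; case: eqP => // Ekj.
by move: Hk; rewrite Ekj Hj.
Qed.

Lemma P1_aff (R : realFieldType) m k0 (th : {ffun J m -> R}) j :
  affine (fun t => P1 k0 (upd th j t)).
Proof.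
rewrite /P1.
apply: (@affine_sum _ _ xpredT (fun (x : {ffun node m -> bool}) t => (\prod_v bern (at_ (upd th j t) v) (x v))
                                     * (k0 <= largest_site_comp x)%:R)) => x.
apply: (affine_mulr (h := fun t => \prod_v bern (at_ (upd th j t) v) (x v))
                    (g := fun _ => (k0 <= largest_site_comp x)%:R)); last by [].
apply: (affine_prod (h := fun v t => bern (at_ (upd th j t) v) (x v)) (i0 := rho j)) => v.
  apply: (affine_bern (h := fun t => at_ (upd th j t) v)) => t.
  rewrite !at_upd; case: ifP => _; ring.
move=> Hv; apply: (cst_bern (h := fun t => at_ (upd th j t) v)) => t.
by rewrite !at_upd eq_sym (negbTE Hv).
Qed.

Lemma prod_upd_aff (R : realFieldType) m (I : finType) (iota : I -> J m)
  (inj : injective iota) (th : {ffun J m -> R}) j (w : {ffun I -> bool}) :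
  affine (fun t => \prod_i bern (upd th j t (iota i)) (w i)).
Proof.
case: (pickP (fun i => iota i == j)) => [i0 /eqP Hi0 | Hn].
  apply: (affine_prod (h := fun i t => bern (upd th j t (iota i)) (w i)) (i0 := i0)) => i.
    apply: (affine_bern (h := fun t => upd th j t (iota i))); exact: affine_upd.
  move=> Hi; apply: (cst_bern (h := fun t => upd th j t (iota i))); apply: cst_upd.
  rewrite -Hi0; apply: contra Hi => /eqP /inj ->; done.
apply: cst_affine.
apply: (cst_prod (h := fun i t => bern (upd th j t (iota i)) (w i))) => i.
apply: (cst_bern (h := fun t => upd th j t (iota i))); apply: cst_upd.
by apply/negbT; exact: (Hn i).
Qed.

Lemma prod_upd_cst (R : realFieldType) m (I : finType) (iota : I -> J m)
  (th : {ffun J m -> R}) j (w : {ffun I -> bool}) :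
  (forall i, iota i != j) ->
  cst (fun t => \prod_i bern (upd th j t (iota i)) (w i)).
Proof.
move=> Hn.
apply: (cst_prod (h := fun i t => bern (upd th j t (iota i)) (w i))) => i.
apply: (cst_bern (h := fun t => upd th j t (iota i))); exact: cst_upd.
Qed.

Lemma P2_aff (R : realFieldType) m k0 (th : {ffun J m -> R}) j :
  affine (fun t => P2 k0 (upd th j t)).
Proof.
rewrite /P2.
apply: (@affine_sum _ _ xpredT (fun (ws : {ffun node m -> bool}) t => \sum_(wb : {ffun link m -> bool})
     (\prod_v bern (upd th j t (inl (inl v))) (ws v)) * (\prod_e bern (upd th j t (inl (inr e))) (wb e))
     * (k0 <= largest_bond_comp ws wb)%:R)) => ws.
apply: (@affine_sum _ _ xpredT (fun (wb : {ffun link m -> bool}) t =>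
     (\prod_v bern (upd th j t (inl (inl v))) (ws v)) * (\prod_e bern (upd th j t (inl (inr e))) (wb e))
     * (k0 <= largest_bond_comp ws wb)%:R)) => wb.
apply: (affine_mulr (h := fun t =>
     (\prod_v bern (upd th j t (inl (inl v))) (ws v)) * (\prod_e bern (upd th j t (inl (inr e))) (wb e)))
     (g := fun _ => (k0 <= largest_bond_comp ws wb)%:R)); last by [].
have i1 : injective (fun v : node m => (inl (inl v) : J m)) by move=> x y [].
have i2 : injective (fun e : link m => (inl (inr e) : J m)) by move=> x y [].
case: j => [[v0|e0]|v0].
- apply: affine_mulr.
    exact: (prod_upd_aff (iota := fun v : node m => (inl (inl v) : J m))).
  exact: (prod_upd_cst (iota := fun e : link m => (inl (inr e) : J m))).
- apply: affine_mull.
    exact: (prod_upd_cst (iota := fun v : node m => (inl (inl v) : J m))).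
  exact: (prod_upd_aff (iota := fun e : link m => (inl (inr e) : J m))).
- apply: cst_affine; apply: cst_mul.
    exact: (prod_upd_cst (iota := fun v : node m => (inl (inl v) : J m))).
  exact: (prod_upd_cst (iota := fun e : link m => (inl (inr e) : J m))).
Qed.

Lemma prod_bool (R : realFieldType) (I : finType) (P : pred I) (b : I -> bool) :
  \prod_(k | P k) ((b k)%:R : R) = ([forall k, P k ==> b k])%:R.
Proof.
case: (boolP [forall k, P k ==> b k]) => [/forallP H | ].
  by rewrite big1 // => k Pk; rewrite (implyP (H k) Pk).
rewrite negb_forall => /existsP [k]; rewrite negb_imply => /andP [Pk nbk].
by rewrite (bigD1 k) //= (negbTE nbk) mul0r.
Qed.

Lemma largest_comp_mono m (o1 o2 : pred (node m)) (r1 r2 : rel (node m)) :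
  (forall u, o1 u -> o2 u) -> (forall u v, r1 u v -> r2 u v) ->
  (largest_comp o1 r1 <= largest_comp o2 r2)%N.
Proof.
move=> Ho Hr; rewrite /largest_comp; apply/bigmax_leqP => u Hu.
apply: leq_trans (leq_bigmax_cond _ (Ho _ Hu)).
apply: subset_leq_card; apply/subsetP => w; rewrite !inE.
apply: connect_sub => a c /Hr H; exact: connect1.
Qed.

Lemma vert_comb m (b : {ffun J m -> bool}) :
  (largest_site_comp [ffun v => [forall k, (rho k == v) ==> b k]]
   <= largest_bond_comp [ffun v => b (inl (inl v))] [ffun e => b (inl (inr e))])%N.
Proof.
apply: largest_comp_mono.
  move=> u; rewrite !ffunE => /forallP /(_ (inl (inl u))); rewrite /= eqxx; exact.
move=> u v /and3P [Hu Hv Ha]; rewrite /bond_rel Ha.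
have Hu' := Hu; have Hv' := Hv.
move: Hu Hv; rewrite !ffunE => /forallP Hu /forallP Hv.
move: (Hu (inl (inl u))) (Hv (inl (inl v))); rewrite /= !eqxx /= => -> -> /=.
rewrite /link_open.
have Hl : is_link [set u; v] by apply/existsP; exists u; apply/existsP; exists v; rewrite Ha eqxx.
rewrite insubT ffunE.
set e := Sub _ _.
have : own e \in [set u; v] by have := own_in e.
case/set2P => He.
  by move: (Hu (inl (inr e))); rewrite /= He eqxx.
by move: (Hv (inl (inr e))); rewrite /= He eqxx.
Qed.

Lemma P1_vert (R : realFieldType) m k0 (b : {ffun J m -> bool}) :
  P1 k0 [ffun k => ((b k)%:R : R)] =
  (k0 <= largest_site_comp [ffun v => [forall k, (rho k == v) ==> b k]])%:R.
Proof.
rewrite /P1; apply: (@point_sum R _ (fun v => at_ [ffun k => ((b k)%:R : R)] v) _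
   (fun x => (k0 <= largest_site_comp x)%:R)) => v.
rewrite /at_ ffunE -prod_bool; apply: eq_bigr => k _; by rewrite ffunE.
Qed.

Lemma P2_vert (R : realFieldType) m k0 (b : {ffun J m -> bool}) :
  P2 k0 [ffun k => ((b k)%:R : R)] =
  (k0 <= largest_bond_comp [ffun v => b (inl (inl v))] [ffun e => b (inl (inr e))])%:R.
Proof.
rewrite /P2.
set wbs : {ffun link m -> bool} := [ffun e => b (inl (inr e))].
set wss : {ffun node m -> bool} := [ffun v => b (inl (inl v))].
transitivity (\sum_(ws : {ffun node m -> bool})
   (\prod_v bern ([ffun k => ((b k)%:R : R)] (inl (inl v))) (ws v))
     * (k0 <= largest_bond_comp ws wbs)%:R).
  apply: eq_bigr => ws _.
  rewrite -(@point_sum R _ (fun e => [ffun k => ((b k)%:R : R)] (inl (inr e))) wbs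
     (fun wb => (k0 <= largest_bond_comp ws wb)%:R)); last by move=> e; rewrite !ffunE.
  by rewrite mulr_sumr; apply: eq_bigr => wb _; rewrite mulrA.
apply: (@point_sum R _ _ wss (fun ws => (k0 <= largest_bond_comp ws wbs)%:R)).
by move=> v; rewrite !ffunE.
Qed.

Definition dd m (v : node m) : nat := #|[set e : link m | own e == v]|.

Definition thstar (R : realFieldType) m (p q : R) : {ffun J m -> R} :=
  [ffun k => match k with inl (inl _) => p | inl (inr _) => q | inr v => q ^+ (2 - dd v) end].

Lemma at_star (R : realFieldType) m (p q : R) v : at_ (thstar m p q) v = p * q ^+ 2.
Proof.
rewrite /at_ big_sumType big_sumType /= !big_pred1_eq !ffunE.
rewrite (eq_bigr (fun _ => q)); last by move=> e _; rewrite ffunE.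
rewrite (eq_bigl (fun e => e \in [set e | own e == v])); last by move=> e; rewrite inE.
rewrite prodr_const -mulrA -exprD subnKC //; exact: own_card.
Qed.

Unset Implicit Arguments.
Theorem lemma4 (R : realFieldType) (m : nat) (p q : R) :
  0 <= p <= 1 -> 0 <= q <= 1 ->
  forall k : nat, P_site_ge m (p * q ^+ 2) k <= P_mixed_ge m p q k.
Proof.
move=> /andP [p0 p1] /andP [q0 q1] k.
have E1 : P_site_ge m (p * q ^+ 2) k = P1 k (thstar m p q).
  rewrite /P_site_ge /P1 big_mkcond; apply: eq_bigr => x _.
  have -> : \prod_v bern (at_ (thstar m p q) v) (x v) = site_weight (p * q ^+ 2) x.
    by apply: eq_bigr => v _; rewrite at_star.
  by case: ifP => _; rewrite ?mulr1 ?mulr0.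
have E2 : P_mixed_ge m p q k = P2 k (thstar m p q).
  rewrite /P_mixed_ge /P2; apply: eq_bigr => ws _; rewrite big_mkcond; apply: eq_bigr => wb _.
  have -> : \prod_v bern (thstar m p q (inl (inl v))) (ws v) = site_weight p ws.
    by apply: eq_bigr => v _; rewrite ffunE.
  have -> : \prod_e bern (thstar m p q (inl (inr e))) (wb e) = bond_weight q wb.
    by apply: eq_bigr => e _; rewrite ffunE.
  by case: ifP => _; rewrite ?mulr1 ?mulr0.
rewrite E1 E2; apply: multiaffine_le.
- exact: P1_aff.
- exact: P2_aff.
- move=> b; rewrite P1_vert P2_vert ler_nat.
  move: (vert_comb b).
  set s := largest_site_comp _; set t := largest_bond_comp _ _ => H.
  case E: (k <= s)%N => //=; by rewrite (leq_trans E H).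
- move=> k'; rewrite ffunE; case: k' => [[v|e]|v]; rewrite ?p0 ?p1 ?q0 ?q1 //.
  by rewrite exprn_ge0 ?exprn_ile1.
Qed.
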